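(* Let $\lambda_0<0<\lambda_1$ be real. Then for all real $t\ne0$, $$T^{(0)}_{(\lambda_0,\lambda_1)}(t)=\frac12\frac{\Phi_{(\lambda_0,\lambda_1,-\lambda_0,-\lambda_1)}(t)}{\Phi_{(\lambda_0-\lambda_1,\lambda_1-\lambda_0,0,-\lambda_0-\lambda_1)}(t)}\le\max\left\{\frac{2\lambda_1-\lambda_0}{2\lambda_1-4\lambda_0},\frac{\lambda_1-2\lambda_0}{4\lambda_1-2\lambda_0}\right\}<1.$$
   Context: For real $\lambda_0,\dots,\lambda_N$, the fundamental function $\Phi_{(\lambda_0,\dots,\lambda_N)}$ is the unique solution $u$ of $\prod_{j=0}^N(\frac{d}{dt}-\lambda_j)u=0$ with $u^{(k)}(0)=0$ for $0\le k\le N-1$ and $u^{(N)}(0)=1$. *)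

(* Defs.v *)
From Stdlib Require Import Reals List ClassicalEpsilon.
From Coquelicot Require Import Coquelicot.
Import ListNotations.
Open Scope R_scope.

Definition shiftD (l : R) (f : R -> R) : R -> R :=
  fun t => Derive f t - l * f t.

(* prod_{j} (d/dt - l_j) applied to f (operators applied in list order;
   they commute on sufficiently smooth f) *)
Fixpoint applyOps (ls : list R) (f : R -> R) : R -> R :=
  match ls with
  | nil => f
  | l :: ls' => applyOps ls' (shiftD l f)
  end.

Definition is_fundamental (ls : list R) (u : R -> R) : Prop :=
  (forall k t, (k <= length ls)%nat -> ex_derive_n u k t) /\
  (forall t, applyOps ls u t = 0) /\
  (forall k, (k < length ls - 1)%nat -> Derive_n u k 0 = 0) /\
  Derive_n u (length ls - 1) 0 = 1.

Definition Phi (ls : list R) : R -> R :=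
  epsilon (inhabits (fun _ : R => 0)) (is_fundamental ls).

(* Main.v *)
Require Import Defs.
From Stdlib Require Import Reals List.
From Coquelicot Require Import Coquelicot.
Import ListNotations.
Open Scope R_scope.
From Stdlib Require Import Lra Lia FunctionalExtensionality ClassicalEpsilon.

Definition bnd (g : nat -> R) : Prop :=
  exists C B, 0 <= C /\ 1 <= B /\ forall n, Rabs (g n) <= C * B ^ n.

Definition Ef (g : nat -> R) (t : R) : R :=
  PSeries (fun n => g n / INR (Factorial.fact n)) t.

Definition Sop (r : R) (g : nat -> R) : nat -> R := fun n => g (S n) - r * g n.

Lemma term_le_exp (y : R) (n : nat) : 0 <= y -> y ^ n / INR (Factorial.fact n) <= exp y.
Proof.
  intro Hy. eapply Rle_trans; [| apply (exp_ge_taylor y n Hy)].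
  destruct n.
  - simpl. lra.
  - rewrite tech5.
    assert (0 <= sum_f_R0 (fun k : nat => y ^ k / INR (Factorial.fact k)) n).
    { apply cond_pos_sum. intro k. apply Rmult_le_pos. apply pow_le; lra.
      apply Rlt_le, Rinv_0_lt_compat, INR_fact_lt_0. }
    lra.
Qed.

Lemma bnd_rad (g : nat -> R) (x : R) : bnd g ->
  Rbar_lt (Rabs x) (CV_radius (fun n => g n / INR (Factorial.fact n))).
Proof.
  intros [C [B [HC [HB Hg]]]].
  destruct (CV_radius_bounded (fun n => g n / INR (Factorial.fact n))) as [Hub _].
  assert (Hin : Rbar_le (Rabs x + 1) (CV_radius (fun n => g n / INR (Factorial.fact n)))).
  { apply Hub. exists (C * exp (B * (Rabs x + 1))). intro n.
    set (r := Rabs x + 1).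
    assert (Hr : 0 <= r) by (unfold r; pose proof (Rabs_pos x); lra).
    rewrite Rabs_mult, Rabs_div by (apply not_0_INR, Factorial.fact_neq_0).
    rewrite (Rabs_right (INR _)) by (apply Rle_ge, pos_INR).
    rewrite (Rabs_right (r ^ n)) by (apply Rle_ge, pow_le; lra).
    apply Rle_trans with (C * B ^ n / INR (Factorial.fact n) * r ^ n).
    { apply Rmult_le_compat_r. apply pow_le; lra.
      unfold Rdiv. apply Rmult_le_compat_r. apply Rlt_le, Rinv_0_lt_compat, INR_fact_lt_0.
      apply Hg. }
    replace (C * B ^ n / INR (Factorial.fact n) * r ^ n) with
      (C * ((B * r) ^ n / INR (Factorial.fact n))) by (rewrite Rpow_mult_distr; field; apply not_0_INR, Factorial.fact_neq_0).
    apply Rmult_le_compat_l; auto. apply term_le_exp. apply Rmult_le_pos; lra. }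
  destruct (CV_radius (fun n => g n / INR (Factorial.fact n))) as [r| |]; simpl in *; auto; lra.
Qed.

Lemma Ef_derive (g : nat -> R) (t : R) : bnd g ->
  is_derive (Ef g) t (Ef (fun n => g (S n)) t).
Proof.
  intro Hb. unfold Ef.
  assert (H := is_derive_PSeries _ t (bnd_rad g t Hb)).
  replace (PSeries (fun n => g (S n) / INR (Factorial.fact n)) t) with
    (PSeries (PS_derive (fun n => g n / INR (Factorial.fact n))) t); auto.
  apply PSeries_ext. intro n. unfold PS_derive.
  rewrite fact_simpl, mult_INR. field. split. apply not_0_INR, Factorial.fact_neq_0.
  apply not_0_INR; lia.
Qed.

Lemma Ef_0 (g : nat -> R) : Ef g 0 = g 0%nat.
Proof. unfold Ef. rewrite PSeries_0. simpl. field. Qed.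

Lemma Ef_lin (g h : nat -> R) (al be t : R) : bnd g -> bnd h ->
  Ef (fun n => al * g n - be * h n) t = al * Ef g t - be * Ef h t.
Proof.
  intros Hg Hh. unfold Ef.
  rewrite <- (PSeries_scal al), <- (PSeries_scal be).
  rewrite <- PSeries_minus.
  - apply PSeries_ext. intro n. unfold PS_minus, PS_scal, PS_plus, PS_opp.
    simpl. unfold plus, opp, scal; simpl. unfold mult; simpl. field.
    apply not_0_INR, Factorial.fact_neq_0.
  - apply ex_pseries_scal. apply Rmult_comm. apply CV_radius_inside, bnd_rad, Hg.
  - apply ex_pseries_scal. apply Rmult_comm. apply CV_radius_inside, bnd_rad, Hh.
Qed.

Lemma Ef_ext (g h : nat -> R) t : (forall n, g n = h n) -> Ef g t = Ef h t.
Proof. intro H. unfold Ef. apply PSeries_ext. intro n. rewrite H. auto. Qed.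

Lemma Ef_zero t : Ef (fun _ => 0) t = 0.
Proof. unfold Ef. transitivity (PSeries (fun _ : nat => 0) t); [ apply PSeries_ext; intro; unfold Rdiv; ring | apply PSeries_const_0]. Qed.

Lemma Ef_neg (g : nat -> R) t : Ef g (- t) = Ef (fun n => (-1) ^ n * g n) t.
Proof.
  unfold Ef, PSeries. apply Series_ext. intro n.
  replace (- t) with ((-1) * t) by ring. rewrite Rpow_mult_distr. unfold Rdiv. ring.
Qed.

Section CS.
Variables p0 p1 p2 p3 : R.
Fixpoint cs (n : nat) : R :=
  match n with
  | S n1 => match n1 with
            | S n2 => match n2 with
                      | S n3 => match n3 with
                                | S m => p3 * cs n1 + p2 * cs n2 + p1 * cs n3 + p0 * cs m
                                | O => 1
                                end
                      | O => 0
                      end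
            | O => 0
            end
  | O => 0
  end.

Lemma cs_rec n : cs (S (S (S (S n)))) = p3 * cs (S (S (S n))) + p2 * cs (S (S n)) + p1 * cs (S n) + p0 * cs n.
Proof. exact eq_refl. Qed.

Lemma cs_bnd : bnd cs.
Proof.
  set (B := 1 + Rabs p0 + Rabs p1 + Rabs p2 + Rabs p3).
  assert (HB : 1 <= B) by (unfold B; pose proof (Rabs_pos p0); pose proof (Rabs_pos p1);
    pose proof (Rabs_pos p2); pose proof (Rabs_pos p3); lra).
  exists 1, B. split; [lra | split; [auto|]].
  assert (H : forall n, Rabs (cs n) <= B ^ n /\ Rabs (cs (S n)) <= B ^ S n /\
     Rabs (cs (S (S n))) <= B ^ S (S n) /\ Rabs (cs (S (S (S n)))) <= B ^ S (S (S n))).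
  { induction n as [|n [H0 [H1 [H2 H3]]]].
    - simpl. rewrite Rabs_R0, Rabs_R1.
      repeat split; try (apply pow_le || apply Rmult_le_pos); try lra.
      replace 1 with (1 * (1 * 1)) at 1 by ring.
      repeat apply Rmult_le_compat; lra.
    - repeat split; auto.
      rewrite cs_rec.
      assert (Hp : forall k, 0 <= B ^ k) by (intro; apply pow_le; lra).
      assert (Hm : forall k, B ^ k <= B ^ S k) by (intro k; simpl; pose proof (Hp k); nra).
      eapply Rle_trans. apply Rabs_triang. eapply Rle_trans. apply Rplus_le_compat_r, Rabs_triang.
      eapply Rle_trans. apply Rplus_le_compat_r, Rplus_le_compat_r, Rabs_triang.
      rewrite !Rabs_mult.
      pose proof (Rabs_pos p0); pose proof (Rabs_pos p1); pose proof (Rabs_pos p2); pose proof (Rabs_pos p3).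
      pose proof (Hm n); pose proof (Hm (S n)); pose proof (Hm (S (S n))).
      assert (Rabs p3 * Rabs (cs (S (S (S n)))) <= Rabs p3 * B ^ S (S (S n))) by (apply Rmult_le_compat_l; auto).
      assert (Rabs p2 * Rabs (cs (S (S n))) <= Rabs p2 * B ^ S (S (S n))) by (apply Rmult_le_compat_l; lra).
      assert (Rabs p1 * Rabs (cs (S n)) <= Rabs p1 * B ^ S (S (S n))) by (apply Rmult_le_compat_l; lra).
      assert (Rabs p0 * Rabs (cs n) <= Rabs p0 * B ^ S (S (S n))) by (apply Rmult_le_compat_l; lra).
      replace (B ^ S (S (S (S n)))) with (B * B ^ S (S (S n))) by reflexivity.
      pose proof (Hp (S (S (S n)))).
      assert (B * B ^ S (S (S n)) = B ^ S (S (S n)) + (Rabs p0 + Rabs p1 + Rabs p2 + Rabs p3) * B ^ S (S (S n))) by (unfold B; ring).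
      lra. }
  intro n. rewrite Rmult_1_l. apply H.
Qed.
End CS.

Lemma cs_flip p0 p1 p2 p3 n : (-1) ^ n * cs p0 p1 p2 p3 n = - cs p0 (- p1) p2 (- p3) n.
Proof.
  assert (H : forall n, ((-1) ^ n * cs p0 p1 p2 p3 n = - cs p0 (- p1) p2 (- p3) n) /\
    ((-1) ^ (S n) * cs p0 p1 p2 p3 (S n) = - cs p0 (- p1) p2 (- p3) (S n)) /\
    ((-1) ^ (S (S n)) * cs p0 p1 p2 p3 (S (S n)) = - cs p0 (- p1) p2 (- p3) (S (S n))) /\
    ((-1) ^ (S (S (S n))) * cs p0 p1 p2 p3 (S (S (S n))) = - cs p0 (- p1) p2 (- p3) (S (S (S n))))).
  { clear n. intro n. induction n as [|n [H0 [H1 [H2 H3]]]].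
    - simpl. repeat split; ring.
    - repeat split; auto.
      rewrite !cs_rec.
      assert (E0 : cs p0 (-p1) p2 (-p3) n = - ((-1)^n * cs p0 p1 p2 p3 n)) by lra.
      assert (E1 : cs p0 (-p1) p2 (-p3) (S n) = - ((-1)^(S n) * cs p0 p1 p2 p3 (S n))) by lra.
      assert (E2 : cs p0 (-p1) p2 (-p3) (S (S n)) = - ((-1)^(S (S n)) * cs p0 p1 p2 p3 (S (S n)))) by lra.
      assert (E3 : cs p0 (-p1) p2 (-p3) (S (S (S n))) = - ((-1)^(S (S (S n))) * cs p0 p1 p2 p3 (S (S (S n))))) by lra.
      rewrite E0, E1, E2, E3. simpl pow. ring. }
  apply (H n).
Qed.

Definition csr (x0 x1 x2 x3 : R) : nat -> R :=
  cs (- (x0 * x1 * x2 * x3))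
     (x0 * x1 * x2 + x0 * x1 * x3 + x0 * x2 * x3 + x1 * x2 * x3)
     (- (x0 * x1 + x0 * x2 + x0 * x3 + x1 * x2 + x1 * x3 + x2 * x3))
     (x0 + x1 + x2 + x3).

Lemma csr_ann x0 x1 x2 x3 n :
  Sop x3 (Sop x2 (Sop x1 (Sop x0 (csr x0 x1 x2 x3)))) n = 0.
Proof. unfold Sop, csr. rewrite cs_rec. ring. Qed.

Lemma csr_flip x0 x1 x2 x3 n : (-1) ^ n * csr x0 x1 x2 x3 n = - csr (-x0) (-x1) (-x2) (-x3) n.
Proof.
  unfold csr. rewrite cs_flip. f_equal. f_equal; ring.
Qed.

Lemma csr_ext x0 x1 x2 x3 y0 y1 y2 y3 :
  - (x0 * x1 * x2 * x3) = - (y0 * y1 * y2 * y3) ->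
  x0 * x1 * x2 + x0 * x1 * x3 + x0 * x2 * x3 + x1 * x2 * x3 = y0 * y1 * y2 + y0 * y1 * y3 + y0 * y2 * y3 + y1 * y2 * y3 ->
  - (x0 * x1 + x0 * x2 + x0 * x3 + x1 * x2 + x1 * x3 + x2 * x3) = - (y0 * y1 + y0 * y2 + y0 * y3 + y1 * y2 + y1 * y3 + y2 * y3) ->
  x0 + x1 + x2 + x3 = y0 + y1 + y2 + y3 ->
  csr x0 x1 x2 x3 = csr y0 y1 y2 y3.
Proof. intros H0 H1 H2 H3. unfold csr. rewrite H0, H1, H2, H3. reflexivity. Qed.

Lemma bnd_Sop r g : bnd g -> bnd (Sop r g).
Proof.
  intros [C [B [HC [HB H]]]]. exists (C * (B + Rabs r)), (B + Rabs r).
  pose proof (Rabs_pos r).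
  split; [apply Rmult_le_pos; lra | split; [lra|]].
  intro n. unfold Sop. eapply Rle_trans; [apply Rabs_triang|].
  rewrite Rabs_Ropp, Rabs_mult.
  pose proof (H n). pose proof (H (S n)).
  assert (Hp : B ^ n <= (B + Rabs r) ^ n) by (apply pow_incr; lra).
  assert (0 <= B ^ n) by (apply pow_le; lra).
  simpl in *.
  assert (Rabs r * Rabs (g n) <= Rabs r * (C * B ^ n)) by (apply Rmult_le_compat_l; auto).
  assert (C * B^n <= C * (B + Rabs r)^n) by (apply Rmult_le_compat_l; auto).
  nra.
Qed.

Lemma bnd_lin al be g h : bnd g -> bnd h -> bnd (fun n => al * g n - be * h n).
Proof.
  intros [C1 [B1 [HC1 [HB1 H1]]]] [C2 [B2 [HC2 [HB2 H2]]]].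
  exists (Rabs al * C1 + Rabs be * C2), (Rmax B1 B2).
  pose proof (Rabs_pos al); pose proof (Rabs_pos be).
  split; [nra | split; [apply Rle_trans with B1; [lra | apply Rmax_l] |]].
  intro n. unfold Rminus. eapply Rle_trans; [apply Rabs_triang|].
  rewrite Rabs_Ropp, !Rabs_mult.
  assert (B1 ^ n <= Rmax B1 B2 ^ n) by (apply pow_incr; split; [lra|apply Rmax_l]).
  assert (B2 ^ n <= Rmax B1 B2 ^ n) by (apply pow_incr; split; [lra|apply Rmax_r]).
  pose proof (H1 n); pose proof (H2 n).
  assert (Rabs al * Rabs (g n) <= Rabs al * (C1 * Rmax B1 B2 ^ n)).
  { apply Rmult_le_compat_l; auto. eapply Rle_trans; eauto. apply Rmult_le_compat_l; auto. }
  assert (Rabs be * Rabs (h n) <= Rabs be * (C2 * Rmax B1 B2 ^ n)).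
  { apply Rmult_le_compat_l; auto. eapply Rle_trans; eauto. apply Rmult_le_compat_l; auto. }
  nra.
Qed.

Lemma bnd_csr x0 x1 x2 x3 : bnd (csr x0 x1 x2 x3).
Proof. apply cs_bnd. Qed.

Lemma Sop_comm r q g : Sop r (Sop q g) = Sop q (Sop r g).
Proof. apply functional_extensionality. intro n. unfold Sop. ring. Qed.

Lemma Sop_zero r : Sop r (fun _ => 0) = (fun _ => 0).
Proof. apply functional_extensionality. intro n. unfold Sop. ring. Qed.

Lemma is_derive_cont (f df : R -> R) : (forall x, is_derive f x (df x)) -> forall x, continuity_pt f x.
Proof.
  intros H x. apply continuity_pt_filterlim. apply (ex_derive_continuous f x).
  exists (df x). apply H.
Qed.

Lemma mono_le (h dh : R -> R) (a b : R) : a <= b -> (forall x, is_derive h x (dh x)) ->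
  (forall x, a <= x <= b -> 0 <= dh x) -> h a <= h b.
Proof.
  intros Hab Hd Hpos. destruct (Req_dec a b) as [E|E]; [subst; lra|].
  destruct (MVT_gen h a b dh) as [c [Hc Heq]].
  - intros x Hx. apply Hd.
  - intros x Hx. apply (is_derive_cont h dh Hd).
  - rewrite Rmin_left, Rmax_right in Hc by lra.
    assert (0 <= dh c) by (apply Hpos; lra).
    assert (0 <= dh c * (b - a)) by (apply Rmult_le_pos; lra). lra.
Qed.

Lemma mono_lt (h dh : R -> R) (a b : R) : a < b -> (forall x, is_derive h x (dh x)) ->
  (forall x, a <= x <= b -> 0 < dh x) -> h a < h b.
Proof.
  intros Hab Hd Hpos.
  destruct (MVT_gen h a b dh) as [c [Hc Heq]].
  - intros x Hx. apply Hd.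
  - intros x Hx. apply (is_derive_cont h dh Hd).
  - rewrite Rmin_left, Rmax_right in Hc by lra.
    assert (0 < dh c) by (apply Hpos; lra).
    assert (0 < dh c * (b - a)) by (apply Rmult_lt_0_compat; lra). lra.
Qed.

Lemma bnd_shift g : bnd g -> bnd (fun n => g (S n)).
Proof.
  intros [C [B [HC [HB H]]]]. exists (C * B), B. split; [nra|split; [auto|]].
  intro n. rewrite Rmult_assoc. apply H.
Qed.

Lemma Ef_lin' g h l t : bnd g -> bnd h -> Ef (fun n => g n - l * h n) t = Ef g t - l * Ef h t.
Proof.
  intros. rewrite <- (Rmult_1_l (Ef g t)). rewrite <- Ef_lin by auto.
  apply Ef_ext. intro; ring.
Qed.

Lemma shiftD_Ef l g : bnd g -> shiftD l (Ef g) = Ef (Sop l g).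
Proof.
  intro Hb. apply functional_extensionality. intro t. unfold shiftD.
  rewrite (is_derive_unique _ _ _ (Ef_derive g t Hb)).
  unfold Sop. rewrite Ef_lin' by (auto; apply bnd_shift; auto). reflexivity.
Qed.

Lemma applyOps_Ef x0 x1 x2 x3 g : bnd g ->
  applyOps [x0; x1; x2; x3] (Ef g) = Ef (Sop x3 (Sop x2 (Sop x1 (Sop x0 g)))).
Proof.
  intro Hb. simpl.
  rewrite shiftD_Ef by auto. rewrite shiftD_Ef by (apply bnd_Sop; auto).
  rewrite shiftD_Ef by (do 2 apply bnd_Sop; auto).
  rewrite shiftD_Ef by (do 3 apply bnd_Sop; auto). reflexivity.
Qed.

Lemma fund_Ef x0 x1 x2 x3 : is_fundamental [x0; x1; x2; x3] (Ef (csr x0 x1 x2 x3)).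
Proof.
  assert (Hr : forall x, Rbar_lt (Rabs x) (CV_radius (fun n => csr x0 x1 x2 x3 n / INR (Factorial.fact n))))
    by (intro; apply bnd_rad, bnd_csr).
  assert (Hd : forall k, Derive_n (Ef (csr x0 x1 x2 x3)) k 0 = csr x0 x1 x2 x3 k).
  { intro k. unfold Ef. rewrite Derive_n_coef.
    - field. apply not_0_INR, Factorial.fact_neq_0.
    - pose proof (Hr 0) as H. rewrite Rabs_R0 in H. exact H. }
  split; [|split; [|split]].
  - intros k t _. apply ex_derive_n_PSeries, Hr.
  - intro t. rewrite applyOps_Ef by apply bnd_csr.
    rewrite (Ef_ext _ (fun _ => 0)) by apply csr_ann. apply Ef_zero.
  - intros k Hk. etransitivity; [apply Hd|]. simpl in Hk.
    destruct k as [|[|[|k]]]; try lia; reflexivity.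
  - etransitivity; [apply (Hd 3%nat)|]. reflexivity.
Qed.

Definition LC (u : R -> R) (c0 c1 c2 c3 c4 : R) : R -> R :=
  fun t => c0 * Derive_n u 0 t + c1 * Derive_n u 1 t + c2 * Derive_n u 2 t + c3 * Derive_n u 3 t + c4 * Derive_n u 4 t.

Lemma Dn_is_derive u i t : ex_derive_n u (S i) t -> is_derive (Derive_n u i) t (Derive_n u (S i) t).
Proof. intro H. simpl in H. simpl. apply Derive_correct. exact H. Qed.

Lemma shiftD_LC u l c0 c1 c2 c3 c4 : (forall k t, (k <= 4)%nat -> ex_derive_n u k t) -> c4 = 0 ->
  shiftD l (LC u c0 c1 c2 c3 c4) = LC u (- l * c0) (c0 - l * c1) (c1 - l * c2) (c2 - l * c3) c3.
Proof.
  intros Hs H4. subst c4. apply functional_extensionality. intro t. unfold shiftD.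
  assert (E : LC u c0 c1 c2 c3 0 = fun t => ((c0 * Derive_n u 0 t + c1 * Derive_n u 1 t) + c2 * Derive_n u 2 t) + c3 * Derive_n u 3 t).
  { apply functional_extensionality. intro x. unfold LC. ring. }
  rewrite E.
  assert (D : is_derive (fun t : R => ((c0 * Derive_n u 0 t + c1 * Derive_n u 1 t) + c2 * Derive_n u 2 t) + c3 * Derive_n u 3 t) t
     (((c0 * Derive_n u 1 t + c1 * Derive_n u 2 t) + c2 * Derive_n u 3 t) + c3 * Derive_n u 4 t)).
  { apply (is_derive_plus (fun t => (c0 * Derive_n u 0 t + c1 * Derive_n u 1 t) + c2 * Derive_n u 2 t)
                          (fun t => c3 * Derive_n u 3 t)).
    apply (is_derive_plus (fun t => c0 * Derive_n u 0 t + c1 * Derive_n u 1 t)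
                          (fun t => c2 * Derive_n u 2 t)).
    apply (is_derive_plus (fun t => c0 * Derive_n u 0 t) (fun t => c1 * Derive_n u 1 t)).
    all: apply is_derive_scal; apply Dn_is_derive; apply Hs; lia. }
  rewrite (is_derive_unique _ _ _ D). unfold LC. ring.
Qed.

Lemma applyOps_expand u x0 x1 x2 x3 : (forall k t, (k <= 4)%nat -> ex_derive_n u k t) -> forall t,
  applyOps [x0; x1; x2; x3] u t =
   Derive_n u 4 t - (x0 + x1 + x2 + x3) * Derive_n u 3 t
   + (x0 * x1 + x0 * x2 + x0 * x3 + x1 * x2 + x1 * x3 + x2 * x3) * Derive_n u 2 t
   - (x0 * x1 * x2 + x0 * x1 * x3 + x0 * x2 * x3 + x1 * x2 * x3) * Derive_n u 1 t
   + x0 * x1 * x2 * x3 * Derive_n u 0 t.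
Proof.
  intros Hs t.
  assert (E : u = LC u 1 0 0 0 0).
  { apply functional_extensionality. intro x. unfold LC. change (Derive_n u 0 x) with (u x). ring. }
  simpl applyOps. rewrite E at 1.
  rewrite shiftD_LC by (auto; ring).
  rewrite shiftD_LC by (auto; ring).
  rewrite shiftD_LC by (auto; ring).
  rewrite shiftD_LC by (auto; ring).
  unfold LC. ring.
Qed.

Lemma cross c x y : 2 * c * x * y <= Rabs c * (x ^ 2 + y ^ 2) /\ - (Rabs c * (x ^ 2 + y ^ 2)) <= 2 * c * x * y.
Proof.
  assert (0 <= (x - y) ^ 2) by (apply pow2_ge_0). assert (0 <= (x + y) ^ 2) by (apply pow2_ge_0).
  destruct (Rle_dec 0 c).
  - rewrite Rabs_right by lra. split; nra.
  - rewrite Rabs_left by lra. split; nra.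
Qed.

Lemma uniq4 x0 x1 x2 x3 u v : is_fundamental [x0; x1; x2; x3] u -> is_fundamental [x0; x1; x2; x3] v ->
  forall t, u t = v t.
Proof.
  intros [Su [Ou [Iu Nu]]] [Sv [Ov [Iv Nv]]].
  simpl length in *.
  set (e1 := x0 + x1 + x2 + x3).
  set (e2 := x0 * x1 + x0 * x2 + x0 * x3 + x1 * x2 + x1 * x3 + x2 * x3).
  set (e3 := x0 * x1 * x2 + x0 * x1 * x3 + x0 * x2 * x3 + x1 * x2 * x3).
  set (e4 := x0 * x1 * x2 * x3).
  set (W := fun i t => Derive_n u i t - Derive_n v i t).
  assert (HW : forall i t, (i <= 3)%nat -> is_derive (W i) t (W (S i) t)).
  { intros i t Hi. unfold W. apply (is_derive_minus (Derive_n u i) (Derive_n v i)).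
    apply Dn_is_derive, Su; lia. apply Dn_is_derive, Sv; lia. }
  assert (W4 : forall t, W 4%nat t = e1 * W 3%nat t - e2 * W 2%nat t + e3 * W 1%nat t - e4 * W 0%nat t).
  { intro t. pose proof (Ou t) as A. pose proof (Ov t) as B.
    rewrite applyOps_expand in A by (intros; apply Su; lia).
    rewrite applyOps_expand in B by (intros; apply Sv; lia).
    unfold W, e1, e2, e3, e4. lra. }
  assert (W0 : forall i, (i <= 3)%nat -> W i 0 = 0).
  { intros i Hi. unfold W. destruct i as [|[|[|[|i]]]]; try lia.
    - rewrite (Iu 0%nat), (Iv 0%nat) by lia. ring.
    - rewrite (Iu 1%nat), (Iv 1%nat) by lia. ring.
    - rewrite (Iu 2%nat), (Iv 2%nat) by lia. ring.
    - change (4-1)%nat with 3%nat in Nu, Nv. rewrite Nu, Nv. ring. }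
  set (E := fun t => W 0%nat t ^ 2 + W 1%nat t ^ 2 + W 2%nat t ^ 2 + W 3%nat t ^ 2).
  set (dE := fun t => 2 * W 0%nat t * W 1%nat t + 2 * W 1%nat t * W 2%nat t + 2 * W 2%nat t * W 3%nat t + 2 * W 3%nat t * W 4%nat t).
  assert (HE : forall t, is_derive E t (dE t)).
  { intro t. unfold E.
    replace (dE t) with (((INR 2 * W 1%nat t * W 0%nat t ^ 1 + INR 2 * W 2%nat t * W 1%nat t ^ 1)
       + INR 2 * W 3%nat t * W 2%nat t ^ 1) + INR 2 * W 4%nat t * W 3%nat t ^ 1) by (unfold dE; simpl; ring).
    apply (is_derive_plus (fun t => W 0%nat t ^ 2 + W 1%nat t ^ 2 + W 2%nat t ^ 2) (fun t => W 3%nat t ^ 2)).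
    apply (is_derive_plus (fun t => W 0%nat t ^ 2 + W 1%nat t ^ 2) (fun t => W 2%nat t ^ 2)).
    apply (is_derive_plus (fun t => W 0%nat t ^ 2) (fun t => W 1%nat t ^ 2)).
    all: apply (is_derive_pow (fun t => W _ t)); apply HW; lia. }
  set (K := 3 + 2 * (Rabs e1 + Rabs e2 + Rabs e3 + Rabs e4)).
  assert (Hbd : forall t, dE t <= K * E t /\ - (K * E t) <= dE t).
  { intro t. unfold dE, E, K. rewrite W4.
    set (a0 := W 0%nat t); set (a1 := W 1%nat t); set (a2 := W 2%nat t); set (a3 := W 3%nat t).
    destruct (cross 1 a0 a1) as [c1 c1']. destruct (cross 1 a1 a2) as [c2 c2'].
    destruct (cross 1 a2 a3) as [c3 c3'].
    destruct (cross e1 a3 a3) as [c4 c4']. destruct (cross (- e2) a2 a3) as [c5 c5'].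
    destruct (cross e3 a1 a3) as [c6 c6']. destruct (cross (- e4) a0 a3) as [c7 c7'].
    rewrite Rabs_R1 in *. rewrite Rabs_Ropp in *.
    assert (q0 : 0 <= a0 ^ 2) by apply pow2_ge_0. assert (q1 : 0 <= a1 ^ 2) by apply pow2_ge_0.
    assert (q2 : 0 <= a2 ^ 2) by apply pow2_ge_0. assert (q3 : 0 <= a3 ^ 2) by apply pow2_ge_0.
    pose proof (Rabs_pos e1); pose proof (Rabs_pos e2); pose proof (Rabs_pos e3); pose proof (Rabs_pos e4).
    assert (0 <= Rabs e1 * a0 ^ 2) by (apply Rmult_le_pos; auto).
    assert (0 <= Rabs e1 * a1 ^ 2) by (apply Rmult_le_pos; auto).
    assert (0 <= Rabs e1 * a2 ^ 2) by (apply Rmult_le_pos; auto).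
    assert (0 <= Rabs e2 * a0 ^ 2) by (apply Rmult_le_pos; auto).
    assert (0 <= Rabs e2 * a1 ^ 2) by (apply Rmult_le_pos; auto).
    assert (0 <= Rabs e2 * a2 ^ 2) by (apply Rmult_le_pos; auto).
    assert (0 <= Rabs e2 * a3 ^ 2) by (apply Rmult_le_pos; auto).
    assert (0 <= Rabs e3 * a0 ^ 2) by (apply Rmult_le_pos; auto).
    assert (0 <= Rabs e3 * a1 ^ 2) by (apply Rmult_le_pos; auto).
    assert (0 <= Rabs e3 * a2 ^ 2) by (apply Rmult_le_pos; auto).
    assert (0 <= Rabs e3 * a3 ^ 2) by (apply Rmult_le_pos; auto).
    assert (0 <= Rabs e4 * a0 ^ 2) by (apply Rmult_le_pos; auto).
    assert (0 <= Rabs e4 * a1 ^ 2) by (apply Rmult_le_pos; auto).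
    assert (0 <= Rabs e4 * a2 ^ 2) by (apply Rmult_le_pos; auto).
    assert (0 <= Rabs e4 * a3 ^ 2) by (apply Rmult_le_pos; auto).
    assert (0 <= Rabs e1 * a3 ^ 2) by (apply Rmult_le_pos; auto).
    split; nra. }
  assert (E0 : E 0 = 0).
  { unfold E. rewrite !W0 by lia. ring. }
  assert (Epos : forall t, 0 <= E t).
  { intro t. unfold E. pose proof (pow2_ge_0 (W 0%nat t)); pose proof (pow2_ge_0 (W 1%nat t));
    pose proof (pow2_ge_0 (W 2%nat t)); pose proof (pow2_ge_0 (W 3%nat t)). lra. }
  assert (Ele : forall t, E t <= 0).
  { intro t. destruct (Rle_lt_dec 0 t) as [Ht|Ht].
    - set (h := fun x => exp (- K * x) * E x).
      set (dh := fun x => exp (- K * x) * (dE x - K * E x)).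
      assert (Hh : forall x, is_derive h x (dh x)).
      { intro x. unfold h, dh.
        assert (D1 : is_derive (fun y => exp (- K * y)) x (- K * exp (- K * x))).
        { auto_derive; auto. ring. }
        pose proof (is_derive_mult _ _ x _ _ D1 (HE x) Rmult_comm) as D.
        replace (exp (- K * x) * (dE x - K * E x)) with (plus (mult (- K * exp (- K * x)) (E x)) (mult (exp (- K * x)) (dE x))) by (unfold plus, mult; simpl; ring).
        exact D. }
      assert (Hm : h t <= h 0).
      { pose proof (mono_le (fun x => - h x) (fun x => - dh x) 0 t Ht) as M.
        assert (M' : - h 0 <= - h t).
        { apply M.
          - intro x. apply (is_derive_opp h). apply Hh.
          - intros x _. unfold dh. destruct (Hbd x).
            pose proof (exp_pos (- K * x)). nra. }
        lra. }
      unfold h in Hm. rewrite E0, Rmult_0_r in Hm. pose proof (exp_pos (- K * t)). nra.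
    - set (h := fun x => exp (K * x) * E x).
      set (dh := fun x => exp (K * x) * (dE x + K * E x)).
      assert (Hh : forall x, is_derive h x (dh x)).
      { intro x. unfold h, dh.
        assert (D1 : is_derive (fun y => exp (K * y)) x (K * exp (K * x))).
        { auto_derive; auto. ring. }
        pose proof (is_derive_mult _ _ x _ _ D1 (HE x) Rmult_comm) as D.
        replace (exp (K * x) * (dE x + K * E x)) with (plus (mult (K * exp (K * x)) (E x)) (mult (exp (K * x)) (dE x))) by (unfold plus, mult; simpl; ring).
        exact D. }
      assert (Hm : h t <= h 0).
      { apply (mono_le h dh t 0); [lra | exact Hh |].
        intros x _. unfold dh. destruct (Hbd x).
        pose proof (exp_pos (K * x)). nra. }
      unfold h in Hm. rewrite E0, Rmult_0_r in Hm. pose proof (exp_pos (K * t)). nra. }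
  intro t. pose proof (Ele t). pose proof (Epos t).
  assert (Hz : W 0%nat t ^ 2 = 0).
  { unfold E in *. pose proof (pow2_ge_0 (W 0%nat t)); pose proof (pow2_ge_0 (W 1%nat t));
    pose proof (pow2_ge_0 (W 2%nat t)); pose proof (pow2_ge_0 (W 3%nat t)). lra. }
  assert (Hw : W 0%nat t = 0) by nra.
  unfold W in Hw. simpl in Hw. lra.
Qed.

Lemma Phi_eq x0 x1 x2 x3 t : Phi [x0; x1; x2; x3] t = Ef (csr x0 x1 x2 x3) t.
Proof.
  unfold Phi.
  pose proof (epsilon_spec (inhabits (fun _ : R => 0)) (is_fundamental [x0; x1; x2; x3])
    (ex_intro _ _ (fund_Ef x0 x1 x2 x3))) as H.
  apply (uniq4 x0 x1 x2 x3 _ _ H (fund_Ef x0 x1 x2 x3)).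
Qed.

Lemma deriv_h r g : bnd g -> forall x,
  is_derive (fun x => exp (- r * x) * Ef g x) x (exp (- r * x) * Ef (Sop r g) x).
Proof.
  intros Hb x.
  assert (D1 : is_derive (fun y => exp (- r * y)) x (- r * exp (- r * x))).
  { auto_derive; auto. ring. }
  pose proof (is_derive_mult _ _ x _ _ D1 (Ef_derive g x Hb) Rmult_comm) as D.
  unfold Sop. rewrite Ef_lin' by (auto; apply bnd_shift; auto).
  replace (exp (- r * x) * (Ef (fun n => g (S n)) x - r * Ef g x)) with
    (plus (mult (- r * exp (- r * x)) (Ef g x)) (mult (exp (- r * x)) (Ef (fun n => g (S n)) x)))
    by (unfold plus, mult; simpl; ring).
  exact D.
Qed.

Lemma chain_nonneg r g : bnd g -> 0 <= g 0%nat -> (forall t, 0 <= t -> 0 <= Ef (Sop r g) t) ->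
  forall t, 0 <= t -> 0 <= Ef g t.
Proof.
  intros Hb H0 H t Ht.
  pose proof (mono_le _ _ 0 t Ht (deriv_h r g Hb)) as M.
  assert (M' : exp (- r * 0) * Ef g 0 <= exp (- r * t) * Ef g t).
  { apply M. intros x Hx. apply Rmult_le_pos. apply Rlt_le, exp_pos. apply H; lra. }
  rewrite Ef_0, Rmult_0_r, exp_0, Rmult_1_l in M'.
  pose proof (exp_pos (- r * t)). nra.
Qed.

Lemma chain_pos0 r g : bnd g -> 0 < g 0%nat -> (forall t, 0 <= t -> 0 <= Ef (Sop r g) t) ->
  forall t, 0 <= t -> 0 < Ef g t.
Proof.
  intros Hb H0 H t Ht.
  pose proof (mono_le _ _ 0 t Ht (deriv_h r g Hb)) as M.
  assert (M' : exp (- r * 0) * Ef g 0 <= exp (- r * t) * Ef g t).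
  { apply M. intros x Hx. apply Rmult_le_pos. apply Rlt_le, exp_pos. apply H; lra. }
  rewrite Ef_0, Rmult_0_r, exp_0, Rmult_1_l in M'.
  pose proof (exp_pos (- r * t)). nra.
Qed.

Lemma chain_pos r g : bnd g -> 0 <= g 0%nat -> (forall t, 0 <= t -> 0 <= Ef (Sop r g) t) ->
  (forall t, 0 < t -> 0 < Ef (Sop r g) t) ->
  forall t, 0 < t -> 0 < Ef g t.
Proof.
  intros Hb H0 H Hs t Ht.
  assert (M1 : exp (- r * 0) * Ef g 0 <= exp (- r * (t/2)) * Ef g (t/2)).
  { apply (mono_le _ _ 0 (t/2) ltac:(lra) (deriv_h r g Hb)).
    intros x Hx. apply Rmult_le_pos. apply Rlt_le, exp_pos. apply H; lra. }
  assert (M2 : exp (- r * (t/2)) * Ef g (t/2) < exp (- r * t) * Ef g t).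
  { apply (mono_lt _ _ (t/2) t ltac:(lra) (deriv_h r g Hb)).
    intros x Hx. apply Rmult_lt_0_compat. apply exp_pos. apply Hs; lra. }
  rewrite Ef_0, Rmult_0_r, exp_0, Rmult_1_l in M1.
  pose proof (exp_pos (- r * t)). nra.
Qed.

Lemma chain_end g : (forall n, g n = 0) -> forall t, 0 <= t -> 0 <= Ef g t.
Proof. intros H t _. rewrite (Ef_ext g (fun _ => 0)) by auto. rewrite Ef_zero. lra. Qed.

Lemma Sop_lin r al be g h : Sop r (fun n => al * g n - be * h n) = fun n => al * Sop r g n - be * Sop r h n.
Proof. apply functional_extensionality. intro n. unfold Sop. ring. Qed.

Section Core.
Variables a b : R.
Hypothesis ha : 0 < a.
Hypothesis hb : 0 < b.

Definition c1 := csr (- a) b a (- b).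
Definition c2 := csr (- a - b) (a + b) 0 (a - b).

Lemma Phi2_pos : forall t, 0 < t -> 0 < Ef c2 t.
Proof.
  assert (B0 : bnd c2) by apply bnd_csr.
  assert (G3 : forall t, 0 <= t -> 0 < Ef (Sop 0 (Sop (a + b) (Sop (- a - b) c2))) t).
  { apply (chain_pos0 (a - b)).
    - repeat apply bnd_Sop; auto.
    - unfold Sop, c2, csr. simpl. lra.
    - apply chain_end. intro n. apply csr_ann. }
  assert (G2 : forall t, 0 <= t -> 0 <= Ef (Sop (a + b) (Sop (- a - b) c2)) t).
  { apply (chain_nonneg 0).
    - repeat apply bnd_Sop; auto.
    - unfold Sop, c2, csr. simpl. lra.
    - intros t Ht. apply Rlt_le, G3, Ht. }
  assert (G2' : forall t, 0 < t -> 0 < Ef (Sop (a + b) (Sop (- a - b) c2)) t).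
  { apply (chain_pos 0).
    - repeat apply bnd_Sop; auto.
    - unfold Sop, c2, csr. simpl. lra.
    - intros t Ht. apply Rlt_le, G3, Ht.
    - intros t Ht. apply G3; lra. }
  assert (G1 : forall t, 0 <= t -> 0 <= Ef (Sop (- a - b) c2) t).
  { apply (chain_nonneg (a + b)).
    - repeat apply bnd_Sop; auto.
    - unfold Sop, c2, csr. simpl. lra.
    - exact G2. }
  assert (G1' : forall t, 0 < t -> 0 < Ef (Sop (- a - b) c2) t).
  { apply (chain_pos (a + b)).
    - repeat apply bnd_Sop; auto.
    - unfold Sop, c2, csr. simpl. lra.
    - exact G2.
    - exact G2'. }
  apply (chain_pos (- a - b)).
  - auto.
  - unfold c2, csr. simpl. lra.
  - exact G1.
  - exact G1'.
Qed.
End Core.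

Section F.
Variables a b K1 K2 : R.

Definition ch8 (g : nat -> R) := Sop (a + b) (Sop (a - b) (Sop b (Sop a (Sop 0 (Sop (- a - b) (Sop (- b) (Sop (- a) g))))))).

Lemma ch8_c1 : ch8 (c1 a b) = fun _ => 0.
Proof.
  unfold ch8.
  rewrite (Sop_comm a 0), (Sop_comm a (- a - b)), (Sop_comm b 0), (Sop_comm b (- a - b)).
  assert (Z : Sop b (Sop a (Sop (- b) (Sop (- a) (c1 a b)))) = fun _ => 0).
  { apply functional_extensionality. intro n. unfold Sop, c1, csr. rewrite cs_rec. ring. }
  rewrite Z, !Sop_zero. reflexivity.
Qed.

Lemma ch8_c2 : ch8 (c2 a b) = fun _ => 0.
Proof.
  unfold ch8.
  rewrite (Sop_comm (- a - b) (- b)), (Sop_comm (- a - b) (- a)).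
  rewrite (Sop_comm 0 (- b)), (Sop_comm 0 (- a)).
  rewrite (Sop_comm (a - b) b), (Sop_comm (a - b) a), (Sop_comm (a - b) (- b)), (Sop_comm (a - b) (- a)).
  rewrite (Sop_comm (a + b) b), (Sop_comm (a + b) a), (Sop_comm (a + b) (- b)), (Sop_comm (a + b) (- a)).
  assert (Z : Sop (a + b) (Sop (a - b) (Sop 0 (Sop (- a - b) (c2 a b)))) = fun _ => 0).
  { apply functional_extensionality. intro n. unfold Sop, c2, csr. rewrite cs_rec. ring. }
  rewrite Z, !Sop_zero. reflexivity.
Qed.

Definition ff := fun n => K1 * c2 a b n - K2 * c1 a b n.

Lemma F_nonneg :
  0 <= ff 0%nat ->
  0 <= Sop (- a) ff 0%nat ->
  0 <= Sop (- b) (Sop (- a) ff) 0%nat ->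
  0 <= Sop (- a - b) (Sop (- b) (Sop (- a) ff)) 0%nat ->
  0 <= Sop 0 (Sop (- a - b) (Sop (- b) (Sop (- a) ff))) 0%nat ->
  0 <= Sop a (Sop 0 (Sop (- a - b) (Sop (- b) (Sop (- a) ff)))) 0%nat ->
  0 <= Sop b (Sop a (Sop 0 (Sop (- a - b) (Sop (- b) (Sop (- a) ff))))) 0%nat ->
  0 <= Sop (a - b) (Sop b (Sop a (Sop 0 (Sop (- a - b) (Sop (- b) (Sop (- a) ff)))))) 0%nat ->
  forall t, 0 <= t -> 0 <= Ef ff t.
Proof.
  intros H0 H1 H2 H3 H4 H5 H6 H7.
  assert (Bf : bnd ff) by (apply bnd_lin; apply bnd_csr).
  apply (chain_nonneg (- a)); auto.
  apply (chain_nonneg (- b)); [repeat apply bnd_Sop; auto | auto |].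
  apply (chain_nonneg (- a - b)); [repeat apply bnd_Sop; auto | auto |].
  apply (chain_nonneg 0); [repeat apply bnd_Sop; auto | auto |].
  apply (chain_nonneg a); [repeat apply bnd_Sop; auto | auto |].
  apply (chain_nonneg b); [repeat apply bnd_Sop; auto | auto |].
  apply (chain_nonneg (a - b)); [repeat apply bnd_Sop; auto | auto |].
  apply (chain_nonneg (a + b)); [repeat apply bnd_Sop; auto | auto |].
  apply chain_end. intro n.
  change (ch8 ff n = 0). unfold ch8, ff. rewrite !Sop_lin.
  change (K1 * ch8 (c2 a b) n - K2 * ch8 (c1 a b) n = 0).
  rewrite ch8_c1, ch8_c2. ring.
Qed.
End F.

Ltac pos := repeat (match goal with
  | |- 0 <= _ + _ => apply Rplus_le_le_0_compat
  | |- 0 <= _ * _ => apply Rmult_le_pos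
  | |- 0 <= _ ^ _ => apply pow_le
  end); try lra.

Lemma regime1 a x : 0 < a -> 0 <= x ->
  forall t, 0 <= t -> 0 <= Ef (ff a (a + x) (2 * (a + x) + a) ((a + x) + 2 * a)) t.
Proof.
  intros ha hx. apply F_nonneg; unfold Sop, ff, c1, c2, csr; simpl; ring_simplify; pos.
Qed.

Lemma regime2 b x : 0 < b -> 0 <= x ->
  forall t, 0 <= t -> 0 <= Ef (ff (b + x) b 1 1) t.
Proof.
  intros hb hx. apply F_nonneg; unfold Sop, ff, c1, c2, csr; simpl; ring_simplify; pos.
Qed.

Definition Mx a b := Rmax ((2 * b + a) / (2 * b + 4 * a)) ((b + 2 * a) / (4 * b + 2 * a)).

Lemma Ef_ff a b K1 K2 t : Ef (ff a b K1 K2) t = K1 * Ef (c2 a b) t - K2 * Ef (c1 a b) t.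
Proof. unfold ff. apply Ef_lin; apply bnd_csr. Qed.

Lemma core a b t : 0 < a -> 0 < b -> 0 < t ->
  0 < Ef (c2 a b) t /\ Ef (c1 a b) t <= 2 * Mx a b * Ef (c2 a b) t.
Proof.
  intros ha hb ht.
  pose proof (Phi2_pos a b t ht) as P2. split; auto.
  destruct (Rle_lt_dec a b) as [Hab|Hab].
  - pose proof (regime1 a (b - a) ha ltac:(lra) t ltac:(lra)) as R.
    replace (a + (b - a)) with b in R by ring.
    rewrite Ef_ff in R.
    assert (HM : (2 * b + a) / (2 * b + 4 * a) <= Mx a b) by apply Rmax_l.
    assert (Hq : 2 * ((2 * b + a) / (2 * b + 4 * a)) * (b + 2 * a) = 2 * b + a) by (field; lra).
    assert (Ef (c1 a b) t * (b + 2 * a) <= 2 * Mx a b * Ef (c2 a b) t * (b + 2 * a)).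
    { assert (2 * ((2 * b + a) / (2 * b + 4 * a)) * Ef (c2 a b) t * (b + 2 * a) <= 2 * Mx a b * Ef (c2 a b) t * (b + 2 * a)).
      { apply Rmult_le_compat_r; [lra|]. apply Rmult_le_compat_r; lra. }
      assert (Eq : 2 * ((2 * b + a) / (2 * b + 4 * a)) * Ef (c2 a b) t * (b + 2 * a) = (2 * ((2 * b + a) / (2 * b + 4 * a)) * (b + 2 * a)) * Ef (c2 a b) t) by ring.
      rewrite Hq in Eq. rewrite Eq in H.
      lra. }
    apply Rmult_le_reg_r with (b + 2 * a); lra.
  - pose proof (regime2 b (a - b) hb ltac:(lra) t ltac:(lra)) as R.
    replace (b + (a - b)) with a in R by ring.
    rewrite Ef_ff in R.
    assert (HM : (b + 2 * a) / (4 * b + 2 * a) <= Mx a b) by apply Rmax_r.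
    assert (H1 : 1 <= 2 * ((b + 2 * a) / (4 * b + 2 * a))).
    { replace (2 * ((b + 2 * a) / (4 * b + 2 * a))) with (1 + 2 * (a - b) / (4 * b + 2 * a)) by (field; lra).
      assert (0 <= 2 * (a - b) / (4 * b + 2 * a)) by (apply Rmult_le_pos; [lra| apply Rlt_le, Rinv_0_lt_compat; lra]).
      lra. }
    assert (1 * Ef (c2 a b) t <= 2 * Mx a b * Ef (c2 a b) t) by (apply Rmult_le_compat_r; lra).
    lra.
Qed.

Lemma Ef_opp g t : bnd g -> Ef (fun n => - g n) t = - Ef g t.
Proof.
  intro Hb. rewrite (Ef_ext _ (fun n => 0 * g n - 1 * g n)) by (intro; ring).
  rewrite Ef_lin by auto. ring.
Qed.

Lemma Ef_csr_neg x0 x1 x2 x3 t : Ef (csr x0 x1 x2 x3) (- t) = - Ef (csr (-x0) (-x1) (-x2) (-x3)) t.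
Proof.
  rewrite Ef_neg. rewrite (Ef_ext _ (fun n => - csr (-x0) (-x1) (-x2) (-x3) n)) by (intro; apply csr_flip).
  apply Ef_opp, bnd_csr.
Qed.

Theorem mainTheorem17 (l0 l1 : R) (h0 : l0 < 0) (h1 : 0 < l1) :
  forall t : R, t <> 0 ->
    / 2 * (Phi [l0; l1; - l0; - l1] t / Phi [l0 - l1; l1 - l0; 0; - l0 - l1] t)
      <= Rmax ((2 * l1 - l0) / (2 * l1 - 4 * l0)) ((l1 - 2 * l0) / (4 * l1 - 2 * l0))
    /\ Rmax ((2 * l1 - l0) / (2 * l1 - 4 * l0)) ((l1 - 2 * l0) / (4 * l1 - 2 * l0)) < 1.
Proof.
  intros t Ht.
  pose (a := - l0). pose (b := l1).
  assert (ha : 0 < a) by (unfold a; lra). assert (hb : 0 < b) by (unfold b; lra).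
  assert (EM : Rmax ((2 * l1 - l0) / (2 * l1 - 4 * l0)) ((l1 - 2 * l0) / (4 * l1 - 2 * l0)) = Mx a b).
  { unfold Mx, a, b. f_equal; f_equal; ring. }
  rewrite EM. split.
  - rewrite !Phi_eq.
    assert (E1 : csr l0 l1 (- l0) (- l1) = c1 a b) by (unfold c1, a, b; apply csr_ext; ring).
    assert (E2 : csr (l0 - l1) (l1 - l0) 0 (- l0 - l1) = c2 a b) by (unfold c2, a, b; apply csr_ext; ring).
    rewrite E1, E2.
    assert (KEY : forall P1 P2 M, 0 < P2 -> P1 <= 2 * M * P2 -> / 2 * (P1 / P2) <= M).
    { intros P1 P2 M HP HL.
      replace M with (/ 2 * (2 * M * P2 * / P2)) by (field; lra).
      apply Rmult_le_compat_l; [lra|]. unfold Rdiv. apply Rmult_le_compat_r; [apply Rlt_le, Rinv_0_lt_compat; lra | lra]. }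
    destruct (Rle_lt_dec 0 t) as [Hp|Hn].
    + assert (Hp' : 0 < t) by lra. destruct (core a b t ha hb Hp') as [P2 P1]. apply KEY; auto.
    + replace t with (- (- t)) by ring.
      unfold c1, c2.
      rewrite (Ef_csr_neg (- a) b a (- b) (- t)), (Ef_csr_neg (- a - b) (a + b) 0 (a - b) (- t)).
      assert (F1 : csr (- - a) (- b) (- a) (- - b) = c1 b a) by (unfold c1; apply csr_ext; ring).
      assert (F2 : csr (- (- a - b)) (- (a + b)) (- 0) (- (a - b)) = c2 b a) by (unfold c2; apply csr_ext; ring).
      rewrite F1, F2.
      destruct (core b a (- t) hb ha ltac:(lra)) as [P2 P1].
      assert (MS : Mx b a = Mx a b).
      { unfold Mx. rewrite Rmax_comm. f_equal; f_equal; ring. }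
      rewrite MS in P1.
      replace (- Ef (c1 b a) (- t) / - Ef (c2 b a) (- t)) with (Ef (c1 b a) (- t) / Ef (c2 b a) (- t)) by (field; lra).
      apply KEY; auto.
  - unfold Mx. apply Rmax_lub_lt.
    + replace ((2 * b + a) / (2 * b + 4 * a)) with (1 - 3 * a / (2 * b + 4 * a)) by (field; lra).
      assert (0 < 3 * a / (2 * b + 4 * a)) by (apply Rdiv_lt_0_compat; lra). lra.
    + replace ((b + 2 * a) / (4 * b + 2 * a)) with (1 - 3 * b / (4 * b + 2 * a)) by (field; lra).
      assert (0 < 3 * b / (4 * b + 2 * a)) by (apply Rdiv_lt_0_compat; lra). lra.
Qed.
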